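(* Every abelian group equipped with its Bohr topology is hereditarily $g$-reversible.
   Context: All topological groups are assumed Hausdorff. A topological group $G$ is called $g$-reversible if every continuous automorphism of $G$ (i.e. every continuous group isomorphism of $G$ onto itself) is an open map. A topological group is hereditarily $g$-reversible if every subgroup of it is $g$-reversible in the subspace topology. The Bohr topology of an abelian group $G$ is the coarsest topology on $G$ making all homomorphisms $G\to\mathbb{T}=\mathbb{R}/\mathbb{Z}$ continuous; it is the strongest precompact group topology on $G$. *)

(* Defs.v *)
From HB Require Import structures.
From mathcomp Require Import all_boot all_algebra.
From Stdlib Require Import Reals ZArith.

Set Implicit Arguments.
Unset Strict Implicit.
Unset Printing Implicit Defensive.

Definition is_topology (X : Type) (O : (X -> Prop) -> Prop) : Prop :=
  O (fun _ => True) /\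
  (forall U V, O U -> O V -> O (fun x => U x /\ V x)) /\
  (forall F : (X -> Prop) -> Prop,
      (forall U, F U -> O U) -> O (fun x => exists U, F U /\ U x)).

Definition generated_topology (X : Type) (S : (X -> Prop) -> Prop)
  (U : X -> Prop) : Prop :=
  forall O, is_topology O -> (forall V, S V -> O V) -> O U.

(* A homomorphism G -> R/Z is represented by a lift chi : G -> R with
   chi(x+y) - chi(x) - chi(y) an integer for all x, y.  Every homomorphism
   G -> R/Z has such a lift (compose with a set-theoretic section of R -> R/Z),
   and every such lift induces one. *)
Definition circle_hom (G : zmodType) (chi : G -> R) : Prop :=
  forall x y : G, exists k : Z,
    chi (GRing.add x y) = Rplus (Rplus (chi x) (chi y)) (IZR k).

(* Open subsets of R/Z, pulled back to R: open 1-periodic subsets of R. *)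
Definition circle_open (U : R -> Prop) : Prop :=
  open_set U /\ forall t : R, U t <-> U (Rplus t 1).

Definition bohr_subbasis (G : zmodType) (A : G -> Prop) : Prop :=
  exists (chi : G -> R) (U : R -> Prop),
    circle_hom chi /\ circle_open U /\ A = (fun x => U (chi x)).

Definition bohr_open (G : zmodType) : (G -> Prop) -> Prop :=
  generated_topology (@bohr_subbasis G).

Definition is_subgroup (G : zmodType) (H : G -> Prop) : Prop :=
  H (GRing.zero : G) /\
  (forall x y : G, H x -> H y -> H (GRing.add x (GRing.opp y))).

Definition subspace_open (G : zmodType) (O : (G -> Prop) -> Prop)
  (H : G -> Prop) (W : {x : G | H x} -> Prop) : Prop :=
  exists V, O V /\ forall h : {x : G | H x}, W h <-> V (proj1_sig h).

Definition sub_additive (G : zmodType) (H : G -> Prop)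
  (f : {x : G | H x} -> {x : G | H x}) : Prop :=
  forall h1 h2 h3 : {x : G | H x},
    proj1_sig h3 = GRing.add (proj1_sig h1) (proj1_sig h2) ->
    proj1_sig (f h3) = GRing.add (proj1_sig (f h1)) (proj1_sig (f h2)).

Definition g_reversible_subgroup (G : zmodType) (O : (G -> Prop) -> Prop)
  (H : G -> Prop) : Prop :=
  forall f : {x : G | H x} -> {x : G | H x},
    sub_additive f ->
    bijective f ->
    (forall W, subspace_open O W -> subspace_open O (fun h => W (f h))) ->
    forall W, subspace_open O W ->
      subspace_open O (fun y => exists h, W h /\ f h = y).

Definition hereditarily_g_reversible (G : zmodType) (O : (G -> Prop) -> Prop)
  : Prop :=
  forall H : G -> Prop, is_subgroup H -> g_reversible_subgroup O H.

(* Main.v *)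
Require Import Defs.
From HB Require Import structures.
From mathcomp Require Import all_boot all_algebra zify.
From Stdlib Require Import Reals ZArith Lra.
From Stdlib Require Import ClassicalEpsilon ProofIrrelevance Classical.
From mathcomp Require boolp classical_sets.
Import GRing.Theory.
Delimit Scope ring_scope with ring.
Set Implicit Arguments.
Unset Strict Implicit.
Local Open Scope ring_scope.

Definition ir (n : int) : R := IZR (ssrZ.Z_of_int n).
Lemma irD m n : ir (m + n) = (ir m + ir n)%R.
Proof. rewrite /ir -plus_IZR; f_equal; lia. Qed.
Lemma irM m n : ir (m * n) = (ir m * ir n)%R.
Proof. rewrite /ir -mult_IZR; f_equal; lia. Qed.
Lemma irN m : ir (- m) = (- ir m)%R.
Proof. rewrite /ir -opp_IZR; f_equal; lia. Qed.
Lemma ir0 : ir 0 = 0%R. Proof. reflexivity. Qed.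
Lemma irS (k : nat) : ir (Posz k.+1) = (ir (Posz k) + 1)%R.
Proof. rewrite /ir -(plus_IZR _ 1); f_equal; lia. Qed.
Lemma irNeg (k : nat) : ir (Negz k) = (- ir (Posz k.+1))%R.
Proof. rewrite /ir -opp_IZR; f_equal; lia. Qed.

Definition cz (a b : R) : Prop := exists k : Z, a = (b + IZR k)%R.

Section czs.
Local Open Scope R_scope.
Lemma cz_refl a : cz a a. Proof. exists 0%Z; simpl; ring. Qed.
Lemma cz_sym a b : cz a b -> cz b a.
Proof. move=> [k ->]; exists (-k)%Z; rewrite opp_IZR; ring. Qed.
Lemma cz_trans a b c : cz a b -> cz b c -> cz a c.
Proof. move=> [k ->] [l ->]; exists (l + k)%Z; rewrite plus_IZR; ring. Qed.
Lemma cz_add a b c d : cz a b -> cz c d -> cz (a + c) (b + d).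
Proof. move=> [k ->] [l ->]; exists (k + l)%Z; rewrite plus_IZR; ring. Qed.
Lemma cz_opp a b : cz a b -> cz (- a) (- b).
Proof. move=> [k ->]; exists (- k)%Z; rewrite opp_IZR; ring. Qed.
Lemma cz_shift a k : cz (a + IZR k) a.
Proof. by exists k. Qed.
Lemma cz_mul n a b : cz a b -> cz (ir n * a) (ir n * b).
Proof. move=> [k ->]; exists (ssrZ.Z_of_int n * k)%Z; rewrite mult_IZR /ir; ring. Qed.
Lemma cz_eq a b : a = b -> cz a b.
Proof. move=> ->; exact: cz_refl. Qed.
Lemma cz_double a : cz a (a + a) -> cz a 0.
Proof. move=> [k E]; exists (- k)%Z; rewrite opp_IZR; lra. Qed.
Lemma cz_sum0 a b : cz (a + b) 0 -> cz b (- a).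
Proof. move=> [k E]; exists k; lra. Qed.
End czs.

Lemma periodic_Z (U : R -> Prop) :
  (forall t : R, U t <-> U (t + 1)%R) -> forall (k : Z) t, U t <-> U (t + IZR k)%R.
Proof.
move=> P k; induction k using Z.peano_ind => t.
- by rewrite Rplus_0_r.
- by rewrite succ_IZR -Rplus_assoc -(P (t + IZR k)%R) IHk.
- rewrite (IHk t) (P (t + IZR (Z.pred k))%R) Rplus_assoc -succ_IZR Z.succ_pred.
  by [].
Qed.

Lemma periodic_cz (U : R -> Prop) :
  (forall t : R, U t <-> U (t + 1)%R) -> forall a b, cz a b -> (U a <-> U b).
Proof. move=> P a b [k ->]; symmetry; exact: periodic_Z. Qed.
Section grp.
Variable G : zmodType.
Implicit Types (K : G -> Prop) (psi : G -> R).

Lemma sg0 K : is_subgroup K -> K 0.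
Proof. by case. Qed.
Lemma sgB K x y : is_subgroup K -> K x -> K y -> K (x - y).
Proof. by move=> [_ h]; apply: h. Qed.
Lemma sgN K x : is_subgroup K -> K x -> K (- x).
Proof. move=> sK kx; rewrite -sub0r; apply: sgB => //; exact: sg0. Qed.
Lemma sgD K x y : is_subgroup K -> K x -> K y -> K (x + y).
Proof. move=> sK kx ky; rewrite -(opprK y); apply: sgB => //; exact: sgN. Qed.
Lemma sgMn K x (k : nat) : is_subgroup K -> K x -> K (x *+ k).
Proof.
move=> sK kx; elim: k => [|k IH]; first by rewrite mulr0n; exact: sg0.
by rewrite mulrS; apply: sgD.
Qed.
Lemma sgMz K x (n : int) : is_subgroup K -> K x -> K (x *~ n).
Proof.
move=> sK kx; case: n => k.
- exact: sgMn.
- have -> : x *~ Negz k = - (x *+ k.+1) by rewrite NegzE mulrNz.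
  by apply: sgN => //; apply: sgMn.
Qed.

Definition hom K psi := forall x y, K x -> K y -> cz (psi (x + y)%ring) (psi x + psi y)%R.

Lemma hom0 K psi : is_subgroup K -> hom K psi -> cz (psi 0) 0%R.
Proof.
move=> sK hK; apply: cz_double; have := hK 0 0 (sg0 sK) (sg0 sK).
by rewrite addr0.
Qed.

Lemma homN K psi x : is_subgroup K -> hom K psi -> K x -> cz (psi (- x)) (- psi x)%R.
Proof.
move=> sK hK kx; apply: cz_sum0; apply: cz_trans (hom0 sK hK).
apply: cz_sym; have := hK x (- x) kx (sgN sK kx); by rewrite subrr.
Qed.

Lemma homMn K psi z (k : nat) : is_subgroup K -> hom K psi -> K z ->
  cz (psi (z *+ k)) (ir (Posz k) * psi z)%R.
Proof.
move=> sK hK kz; elim: k => [|k IH].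
  rewrite mulr0n; have -> : (ir (Posz 0) * psi z = 0)%R by rewrite /ir /=; ring.
  exact: (hom0 sK hK).
rewrite mulrS irS; apply: cz_trans (hK _ _ kz (sgMn k sK kz)) _.
have -> : ((ir k + 1) * psi z = psi z + ir k * psi z)%R by ring.
by apply: cz_add => //; apply: cz_refl.
Qed.

Lemma homMz K psi z (n : int) : is_subgroup K -> hom K psi -> K z ->
  cz (psi (z *~ n)) (ir n * psi z)%R.
Proof.
move=> sK hK kz; case: n => k.
- exact: (homMn k sK hK kz).
- have -> : z *~ Negz k = - (z *+ k.+1) by rewrite NegzE mulrNz.
  rewrite irNeg; apply: cz_trans (homN sK hK (sgMn k.+1 sK kz)) _.
  rewrite Ropp_mult_distr_l_reverse; apply: cz_opp; exact: (homMn k.+1 sK hK kz).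
Qed.
End grp.
Section step.
Variable G : zmodType.
Variables (K : G -> Prop) (psi : G -> R) (x : G).
Hypotheses (sK : is_subgroup K) (hK : hom K psi).

Lemma key_t : exists t : R, forall n : int, K (x *~ n) -> cz (psi (x *~ n)) (ir n * t)%R.
Proof.
case: (classic (exists k : nat, (0 < k)%nat /\ K (x *~ Posz k))) => [ex|nex].
- pose P := fun k : nat => (0 < k)%nat && boolp.asbool (K (x *~ Posz k)).
  have exP : exists k, P k.
    by case: ex => k [k0 kk]; exists k; rewrite /P k0; apply/boolp.asboolP.
  case: (ex_minnP exP) => m /andP [m0 /boolp.asboolP Km] mmin.
  have irm : ir (Posz m) <> 0%R.
    rewrite /ir; apply: not_0_IZR; lia.
  exists (psi (x *~ Posz m) / ir (Posz m))%R => n Kn.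
  have m0' : (Posz m != 0) by rewrite eqz_nat -lt0n.
  have Kr : K (x *~ (modz n (Posz m))).
    have -> : (modz n (Posz m)) = n - (divz n (Posz m)) * Posz m.
      by rewrite {2}(divz_eq n (Posz m)) addrC addKr.
    rewrite mulrzBr; apply: sgB => //; rewrite mulrC mulrzA; exact: sgMz.
  have r0 : (modz n (Posz m)) = 0.
    have := modz_ge0 n m0'; have := ltz_mod n m0'.
    move: Kr; case E: (modz n (Posz m)) => [r|r] //= Kr lt _.
    case: r E Kr lt => [|r] E Kr lt; first by [].
    have := mmin r.+1; rewrite /P /= => /(_ (introT (boolp.asboolP _) Kr)).
    move: lt; rewrite /Num.norm /=; lia.
  have En : n = (divz n (Posz m)) * Posz m by rewrite {1}(divz_eq n (Posz m)) r0 addr0.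
  rewrite En mulrC mulrzA irM.
  apply: cz_trans (homMz _ sK hK Km) _.
  apply: cz_eq; field; exact: irm.
- exists 0%R => n Kn.
  have n0 : n = 0.
    case: n Kn => k Kk.
    + case: k Kk => [|k] Kk //; case: nex; by exists k.+1.
    + case: nex; exists k.+1; split => //.
      have := sgN sK Kk; by rewrite NegzE mulrNz opprK.
  rewrite n0 Rmult_0_r; exact: (hom0 sK hK).
Qed.
End step.
Section step2.
Variable G : zmodType.
Variables (K : G -> Prop) (psi : G -> R) (x : G) (t : R).
Hypotheses (sK : is_subgroup K) (hK : hom K psi)
  (Ht : forall n : int, K (x *~ n) -> cz (psi (x *~ n)) (ir n * t)%R).

Definition rep (y : G) (kn : G * int) := K kn.1 /\ y = kn.1 + x *~ kn.2.
Definition Kx (y : G) := exists kn, rep y kn.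
Definition psix (y : G) : R :=
  match excluded_middle_informative (exists kn, rep y kn) with
  | left e => let kn := proj1_sig (constructive_indefinite_description _ e) in
              (psi kn.1 + ir kn.2 * t)%R
  | right _ => 0%R
  end.

Lemma psix_rep y k n : rep y (k, n) -> cz (psix y) (psi k + ir n * t)%R.
Proof.
move=> r; rewrite /psix; case: excluded_middle_informative => [e|ne]; last first.
  by case: ne; exists (k, n).
case: (constructive_indefinite_description _ e) => [[k' n'] [/= Kk' E']] /=.
case: r => /= Kk E.
have D : k' - k = x *~ (n - n').
  rewrite mulrzBr.
  have -> : k' = (k + x *~ n) - x *~ n' by rewrite -E E' addrK.
  by rewrite addrAC (addrC k) addrK.
have Kd : K (x *~ (n - n')) by rewrite -D; apply: sgB.
have e1 := Ht Kd.
have e2 := hK Kk Kd.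
rewrite -D addrC subrK in e2.
rewrite D in e2.
eapply cz_trans; first exact: (cz_add e2 (cz_refl _)).
eapply cz_trans; first exact: (cz_add (cz_add (cz_refl _) e1) (cz_refl _)).
apply: cz_eq; rewrite irD irN; ring.
Qed.

Lemma Kx_sub : is_subgroup Kx.
Proof.
split.
  exists (0, 0); split => /=; [exact: sg0 | by rewrite addr0].
move=> y z [[k1 n1] [/= K1 ->]] [[k2 n2] [/= K2 ->]].
exists (k1 - k2, n1 - n2); split => /=; first exact: sgB.
by rewrite mulrzBr opprD addrACA.
Qed.

Lemma Kx_K y : K y -> Kx y.
Proof. move=> Ky; exists (y, 0); split => //=; by rewrite mulr0z addr0. Qed.

Lemma Kx_x : Kx x.
Proof. exists (0, 1); split => /=; [exact: sg0 | by rewrite add0r]. Qed.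

Lemma psix_K y : K y -> cz (psix y) (psi y).
Proof.
move=> Ky; apply: cz_trans (psix_rep (k:=y) (n:=0) _) _.
  split => //=; by rewrite mulr0z addr0.
apply: cz_eq; rewrite ir0; ring.
Qed.

Lemma psix_hom : hom Kx psix.
Proof.
move=> y z [[k1 n1] r1] [[k2 n2] r2].
have r3 : rep (y + z) (k1 + k2, n1 + n2).
  case: r1 r2 => /= K1 -> [/= K2 ->]; split => /=; first exact: sgD.
  by rewrite mulrzDr addrACA.
apply: cz_trans (psix_rep r3) _.
apply: cz_sym; apply: cz_trans (cz_add (psix_rep r1) (psix_rep r2)) _.
apply: cz_sym; apply: cz_trans (cz_add (hK r1.1 r2.1) (cz_refl (ir (n1 + n2) * t)%R)) _.
apply: cz_eq; rewrite irD /=; ring.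
Qed.
End step2.
Section zorn.
Variable G : zmodType.
Variables (H : G -> Prop) (c : G -> R).
Hypotheses (sH : is_subgroup H) (hH : hom H c).

Definition good (p : (G -> Prop) * (G -> R)) :=
  [/\ is_subgroup p.1, (forall y, H y -> p.1 y),
      (forall y, H y -> cz (p.2 y) (c y)) & hom p.1 p.2].

Definition T := {p | good p}.
Definition KK (s : T) := (proj1_sig s).1.
Definition PP (s : T) := (proj1_sig s).2.
Definition le (s u : T) :=
  (forall y, KK s y -> KK u y) /\ (forall y, KK s y -> cz (PP s y) (PP u y)).

Lemma good_sub (s : T) : is_subgroup (KK s).
Proof. by case: s => [p [a b d e]]. Qed.
Lemma good_H (s : T) y : H y -> KK s y.
Proof. by case: s => [p [a b d e]]; rewrite /KK /=; apply: b. Qed.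
Lemma good_c (s : T) y : H y -> cz (PP s y) (c y).
Proof. by case: s => [p [a b d e]]; rewrite /PP /=; apply: d. Qed.
Lemma good_hom (s : T) : hom (KK s) (PP s).
Proof. by case: s => [p [a b d e]]. Qed.

Lemma base_good : good (H, c).
Proof. split => //= y _; exact: cz_refl. Qed.
Definition t0 : T := exist _ (H, c) base_good.

Lemma le_refl s : le s s.
Proof. by split => // y _; apply: cz_refl. Qed.
Lemma le_trans r s u : le r s -> le s u -> le r u.
Proof.
move=> [a1 b1] [a2 b2]; split => y Ky; first by auto.
apply: cz_trans (b1 _ Ky) (b2 _ (a1 _ Ky)).
Qed.

Section chain.
Variable A : T -> Prop.
Hypothesis tot : forall s u, A s -> A u -> le s u \/ le u s.
Variable s0 : T.
Hypothesis As0 : A s0.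

Definition KU y := exists s, A s /\ KK s y.
Definition PU y : R :=
  match excluded_middle_informative (exists s, A s /\ KK s y) with
  | left e => PP (proj1_sig (constructive_indefinite_description _ e)) y
  | right _ => 0%R
  end.

Lemma PU_spec s y : A s -> KK s y -> cz (PU y) (PP s y).
Proof.
move=> As Ks; rewrite /PU; case: excluded_middle_informative => [e|ne]; last first.
  by case: ne; exists s.
case: (constructive_indefinite_description _ e) => q [Aq Kq] /=.
case: (tot As Aq) => [[_ b]|[_ b]].
  by apply: cz_sym; apply: b.
by apply: b.
Qed.

Lemma common s1 s2 : A s1 -> A s2 ->
  exists s, [/\ A s, (forall y, KK s1 y -> KK s y) & (forall y, KK s2 y -> KK s y)].
Proof.
move=> A1 A2; case: (tot A1 A2) => [[a _]|[a _]].
  by exists s2; split.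
by exists s1; split.
Qed.

Lemma KU_sub : is_subgroup KU.
Proof.
split; first by exists s0; split => //; apply: sg0; apply: good_sub.
move=> y z [s1 [A1 K1]] [s2 [A2 K2]].
case: (common A1 A2) => s [As i1 i2]; exists s; split => //.
apply: sgB; [exact: good_sub | exact: i1 | exact: i2].
Qed.

Lemma PU_hom : hom KU PU.
Proof.
move=> y z [s1 [A1 K1]] [s2 [A2 K2]].
case: (common A1 A2) => s [As i1 i2].
have Ky := i1 _ K1; have Kz := i2 _ K2.
have Kyz : KK s (y + z) by apply: sgD => //; apply: good_sub.
apply: cz_trans (PU_spec As Kyz) _.
apply: cz_trans (good_hom Ky Kz) _.
apply: cz_sym; apply: cz_add; exact: PU_spec.
Qed.

Lemma U_good : good (KU, PU).
Proof.
split => /=.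
- exact: KU_sub.
- by move=> y Hy; exists s0; split => //; apply: good_H.
- move=> y Hy; apply: cz_trans (PU_spec As0 (good_H s0 Hy)) _; exact: good_c.
- exact: PU_hom.
Qed.

Lemma U_ub s : A s -> le s (exist _ (KU, PU) U_good).
Proof.
move=> As; split => y Ky /=; first by exists s.
apply: cz_sym; exact: PU_spec.
Qed.
End chain.

Lemma extend_step (s : T) (x : G) : exists u : T, le s u /\ KK u x.
Proof.
have sK := @good_sub s; have hK := @good_hom s.
case: (key_t x sK hK) => t Ht.
have g : good (Kx (KK s) x, psix (KK s) (PP s) x t).
  split => /=.
  - exact: Kx_sub.
  - by move=> y Hy; apply: Kx_K; apply: good_H.
  - move=> y Hy; eapply cz_trans; first exact: (psix_K sK hK Ht (good_H s Hy)).
    exact: good_c.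
  - exact: psix_hom.
exists (exist _ _ g); split; last exact: Kx_x.
split => y Ky /=; first exact: Kx_K.
apply: cz_sym; exact: psix_K.
Qed.

Lemma extension : exists psi : G -> R, circle_hom psi /\ forall y, H y -> cz (psi y) (c y).
Proof.
pose Rb := fun s u : T => boolp.asbool (le s u).
have r1 : forall s, Rb s s.
  by move=> s; apply/boolp.asboolP; exact: le_refl.
have r2 : forall r s u, Rb r s -> Rb s u -> Rb r u.
  move=> r s u /boolp.asboolP a /boolp.asboolP b; apply/boolp.asboolP; exact: le_trans a b.
have r3 : forall A : classical_sets.set T, classical_sets.total_on A (fun x y => Rb x y) ->
    exists u, forall s, A s -> Rb s u.
  move=> A totA.
  have tot : forall s u, A s -> A u -> le s u \/ le u s.
    move=> s u As Au; case: (totA s u As Au) => /boolp.asboolP; auto.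
  case: (classic (exists s, A s)) => [[s0 As0]|ne].
    exists (exist _ (KU A, PU A) (U_good tot As0)) => s As.
    apply/boolp.asboolP; exact: U_ub.
  exists t0 => s As; case: ne; by exists s.
have [m mm] := classical_sets.ZL_preorder t0 r1 r2 r3.
have full : forall y, KK m y.
  move=> y; case: (extend_step m y) => u [lmu Ku].
  have /boolp.asboolP [a _] := mm u (introT (boolp.asboolP _) lmu).
  exact: a.
exists (PP m); split.
- move=> y z; exact: (good_hom (full y) (full z)).
- move=> y Hy; exact: good_c.
Qed.
End zorn.
Section bohr.
Variable G : zmodType.

Lemma bo_sub (V : G -> Prop) : bohr_subbasis V -> bohr_open V.
Proof. move=> SV O _ hS; exact: hS. Qed.
Lemma bo_true : bohr_open (fun _ : G => True).
Proof. move=> O [h _] _; exact: h. Qed.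
Lemma bo_and (V W : G -> Prop) : bohr_open V -> bohr_open W -> bohr_open (fun x => V x /\ W x).
Proof. move=> hV hW O tO hS; case: (tO) => _ [h _]; apply: h; [exact: hV|exact: hW]. Qed.
Lemma bo_union (F : (G -> Prop) -> Prop) :
  (forall U, F U -> bohr_open U) -> bohr_open (fun x => exists U, F U /\ U x).
Proof. move=> hF O tO hS; case: (tO) => _ [_ h]; apply: h => U FU; exact: hF. Qed.

Lemma sig_eq (H : G -> Prop) (u v : {x : G | H x}) : proj1_sig u = proj1_sig v -> u = v.
Proof.
case: u => a p; case: v => b q /= E; subst b.
by rewrite (proof_irrelevance _ p q).
Qed.
End bohr.

Unset Implicit Arguments.

Theorem proposition7p5 (G : zmodType) :
  @hereditarily_g_reversible G (@bohr_open G).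
Proof.
move=> H sH f addf [g fg gf] _ W [V [oV hW]].
pose O' := fun V : G -> Prop => exists V', bohr_open V' /\
   forall y : {x : G | H x}, V (proj1_sig (g y)) <-> V' (proj1_sig y).
have tO : is_topology O'.
  split; [|split].
  - exists (fun _ => True); split; [exact: bo_true | by []].
  - move=> U1 U2 [V1 [o1 e1]] [V2 [o2 e2]]; exists (fun x => V1 x /\ V2 x); split.
      exact: bo_and.
    by move=> y; split => [[a b]|[a b]]; split; [apply/e1|apply/e2|apply/e1|apply/e2].
  - move=> F hF.
    exists (fun x => exists V', (bohr_open V' /\ exists U, F U /\
       forall y : {x : G | H x}, U (proj1_sig (g y)) <-> V' (proj1_sig y)) /\ V' x).
    split.
      by apply: bo_union => U [oU _].
    move=> y; split.
      move=> [U [FU Uy]]; case: (hF U FU) => V' [oV' e].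
      exists V'; split; [split => //; exists U; split => // | by apply/e].
    move=> [V' [[oV' [U [FU e]]] V'y]]; exists U; split => //; by apply/e.
have hS : forall V, bohr_subbasis V -> O' V.
  move=> _ [chi [U [hchi [oU ->]]]].
  pose cc := fun x : G => match excluded_middle_informative (H x) with
     | left p => chi (proj1_sig (g (exist _ x p))) | right _ => 0%R end.
  have ccE : forall y : {x : G | H x}, cc (proj1_sig y) = chi (proj1_sig (g y)).
    move=> [x p] /=; rewrite /cc; case: excluded_middle_informative => [p'|np] //=.
    by rewrite (proof_irrelevance _ p' p).
  have hc : hom H cc.
    move=> x y Hx Hy.
    have Hxy : H (x + y) by apply: sgD.
    pose a := g (exist _ x Hx); pose b := g (exist _ y Hy).
    pose s := exist H (proj1_sig a + proj1_sig b) (sgD sH (proj2_sig a) (proj2_sig b)).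
    have fs : f s = exist _ (x + y) Hxy.
      apply: sig_eq; rewrite (addf a b s erefl) /a /b !gf //.
    have -> : cc (x + y) = chi (proj1_sig s).
      by rewrite (ccE (exist _ (x + y) Hxy)) -fs fg.
    rewrite (ccE (exist _ x Hx)) (ccE (exist _ y Hy)) /=.
    exact: hchi.
  case: (extension sH hc) => psi [hpsi epsi].
  exists (fun x => U (psi x)); split.
    apply: bo_sub; exists psi, U; split => //.
  move=> y; rewrite -ccE; symmetry.
  apply: (periodic_cz oU.2); apply: epsi; exact: proj2_sig.
have [V' [oV' e]] : O' V := oV O' tO hS.
exists V'; split => // y; split.
  move=> [h [Wh <-]]; apply/e; rewrite fg; exact/hW.
move=> V'y; exists (g y); split; last exact: gf.
by apply/hW; apply/e.
Qed.
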